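(* Let $t$ be a positive integer and $\mathbf v$ a good vector with respect to $t$. The code $\mathcal C$ of Construction C built from $\mathbf v$ is an $(n,(t+1)n,2t+1,n)$-PIR array code over $\mathbb{F}_q$, where $n=4t+1$ if $\mathbf v$ has length $2t$ and $n=4t+2$ if $\mathbf v$ has length $2t+1$.
   Context: Fix a finite field $\mathbb{F}_q$. Good vector: for a positive integer $t$, a vector $\mathbf v=(v_1,\dots,v_{2t})\in[t]^{2t}$ or $\mathbf v\in\{0,\dots,t\}^{2t+1}$ is good w.r.t. $t$ if every $j\in[t]$ appears exactly twice in $\mathbf v$ and whenever $v_i=v_{i'}=j\in[t]$ with $i<i'$ then $i'-i=j$; for $j\in[t]$ let $j(\mathbf v)=\max\{i:v_i=j\}$. Construction C: let $n=4t+1$ if $|\mathbf v|=2t$ and $n=4t+2$ if $|\mathbf v|=2t+1$; all indices are taken modulo $n$ with representatives in $[n]$. For $\mathbf x=(x_1,\dots,x_n)\in\mathbb{F}_q^n$, $i\in[n]$, $j\in[t]$, put $y_{i,j}=x_{i-t-j(\mathbf v)}+x_{i-t-j(\mathbf v)+j}$, and define $\mathcal C(\mathbf x)=(\mathbf c_1,\dots,\mathbf c_n)$ with $\mathbf c_i=(x_i,y_{i,1},\dots,y_{i,t})$. An $(n,N,k,m)$-PIR array code over $\mathbb{F}_q$ is an $\mathbb{F}_q$-linear map $\mathbf x\mapsto(\mathbf c_1,\dots,\mathbf c_m)$ with buckets $\mathbf c_\ell\in\mathbb{F}_q^{N_\ell}$, $N_\ell\ge1$, $\sum_\ell N_\ell=N$,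 such that for each $i\in[n]$ there is a partition of $[m]$ into $k$ sets $R_1,\dots,R_k$ such that for each $j$, $x_i$ is an $\mathbb{F}_q$-linear combination of values $f_\ell(\mathbf c_\ell)$, $\ell\in R_j$, for some linear functionals $f_\ell$ (independent of $\mathbf x$). *)

(* Defs.v *)
From mathcomp Require Import all_boot all_order all_algebra.
Set Implicit Arguments. Unset Strict Implicit. Unset Printing Implicit Defensive.
Import GRing.Theory.
Local Open Scope ring_scope.

(** Good vector w.r.t. t (entries are nats; positions 0-based in the seq,
    differences of positions are the same as with 1-based positions). *)
Definition good_vector (t : nat) (v : seq nat) : Prop :=
  ((size v = (2 * t)%N /\ all (fun a => (1 <= a <= t)%N) v) \/
   (size v = (2 * t + 1)%N /\ all (fun a => (a <= t)%N) v)) /\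
  (forall j : nat, (1 <= j <= t)%N -> count_mem j v = 2%N) /\
  (forall (i i' j : nat), (i < i' < size v)%N -> (1 <= j <= t)%N ->
      nth 0%N v i = j -> nth 0%N v i' = j -> (i' - i)%N = j).

Definition jpos (v : seq nat) (j : nat) : nat :=
  \max_(i < size v | nth 0%N v i == j) i.+1.

Definition nC (t : nat) (v : seq nat) : nat :=
  if size v == (2 * t)%N then (4 * t + 1)%N else (4 * t + 2)%N.

Lemma nC_gt0 t v : (0 < nC t v)%N.
Proof. by rewrite /nC; case: ifP => _; rewrite ?addn1 ?addn2. Qed.

Definition modC (t : nat) (v : seq nat) (k : nat) : 'I_(nC t v) :=
  Ordinal (ltn_pmod k (nC_gt0 t v)).

(** Paper index i in [n] corresponds to the ordinal i-1.
    The paper's index  i - t - j(v)  (mod n, rep. in [n]) is, 0-based,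
    (i0 + n - (t + j(v))) mod n, and i - t - j(v) + j is that plus j. *)
Definition yC (F : fieldType) (t : nat) (v : seq nat)
    (x : 'rV[F]_(nC t v)) (i0 : 'I_(nC t v)) (j : nat) : F :=
  let b := (i0 + nC t v - (t + jpos v j))%N in
  x 0 (modC t v b) + x 0 (modC t v (b + j)).

Definition constructionC (F : fieldType) (t : nat) (v : seq nat)
    (i0 : 'I_(nC t v)) (x : 'rV[F]_(nC t v)) : 'rV[F]_t.+1 :=
  \row_(j < t.+1) (if j == ord0 then x 0 i0 else yC x i0 j).

Definition is_PIR_array_code (F : fieldType) (n N k m : nat)
    (Ns : 'I_m -> nat) (enc : forall l : 'I_m, 'rV[F]_n -> 'rV[F]_(Ns l)) : Prop :=
  (forall l (a : F) (u w : 'rV[F]_n), enc l (a *: u + w) = a *: enc l u + enc l w) /\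
  (forall l, (0 < Ns l)%N) /\
  (\sum_(l < m) Ns l)%N = N /\
  (forall i : 'I_n, exists P : {set {set 'I_m}},
      partition P [set: 'I_m] /\ #|P| = k /\
      forall R, R \in P ->
        exists (f : forall l : 'I_m, 'cV[F]_(Ns l)) (a : 'I_m -> F),
          forall x : 'rV[F]_n,
            x 0 i = \sum_(l in R) a l * (enc l x *m f l) 0 0).

Arguments is_PIR_array_code : clear implicits.
Arguments constructionC : clear implicits.

(* Main.v *)
Require Import Defs.
From mathcomp Require Import all_boot all_order all_algebra.
From mathcomp Require Import zify ring.
Set Implicit Arguments. Unset Strict Implicit. Unset Printing Implicit Defensive.
Import GRing.Theory.


Lemma two_occ (j : nat) (v : seq nat) : (1 < count_mem j v)%N ->
  exists q1 q2, (q1 < q2 < size v)%N /\ nth 0%N v q1 = j /\ nth 0%N v q2 = j.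
Proof.
elim: v => [|x s IH] //=.
case: (x =P j) => [->|Hx] /= H.
  move: H; rewrite add1n ltnS -has_count has_pred1 => js; exists 0%N, (index j s).+1; split; last by rewrite /= nth_index.
  by rewrite /= ltnS index_mem.

have [q1 [q2 [Hq [E1 E2]]]] := IH H.
by exists q1.+1, q2.+1.
Qed.

Lemma jpos_ge (v : seq nat) j q : (q < size v)%N -> nth 0%N v q = j -> (q < jpos v j)%N.
Proof.
move=> Hq Hn; rewrite /jpos.
exact: (@leq_bigmax_cond _ (fun i : 'I_(size v) => nth 0%N v i == j)
   (fun i : 'I_(size v) => (i : nat).+1) (Ordinal Hq) (introT eqP Hn)).
Qed.

Lemma jpos_att (v : seq nat) j q : (q < size v)%N -> nth 0%N v q = j ->
  exists2 p, (p < size v)%N & nth 0%N v p = j /\ jpos v j = p.+1.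
Proof.
move=> Hq Hn; rewrite /jpos.
rewrite (bigmax_eq_arg (Ordinal Hq)) /=; last by apply/eqP.
case: arg_maxnP => /=; first by apply/eqP.
move=> p /eqP Pp _; by exists p.
Qed.

Lemma jpos_facts t (v : seq nat) j : good_vector t v -> (1 <= j <= t)%N ->
  [/\ (j < jpos v j <= size v)%N, nth 0%N v (jpos v j).-1 = j,
      nth 0%N v ((jpos v j).-1 - j) = j &
      forall q, (q < size v)%N -> nth 0%N v q = j ->
         q = (jpos v j).-1 \/ q = ((jpos v j).-1 - j)%N].
Proof.
move=> [_ [Hc Hd]] Hj.
have [q1 [q2 [/andP[H12 H2s] [E1 E2]]]] : exists q1 q2, (q1 < q2 < size v)%N /\ nth 0%N v q1 = j /\ nth 0%N v q2 = j.
  by apply: two_occ; rewrite Hc.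
have [p Hp [Ep Jp]] := jpos_att (ltn_trans H12 H2s) E1.
have key : forall q, (q < size v)%N -> nth 0%N v q = j ->
         q = (jpos v j).-1 \/ q = ((jpos v j).-1 - j)%N.
  move=> q Hq Eq; have := jpos_ge Hq Eq; rewrite Jp ltnS leq_eqVlt.
  case/orP=> [/eqP->|Hlt]; first by left.
  right; have := Hd q p j; rewrite Hlt Hp Hj => /(_ isT isT Eq Ep); lia.
have K1 := key _ (ltn_trans H12 H2s) E1.
have K2 := key _ H2s E2.
have Hj1 : (1 <= j)%N by case/andP: Hj.
split.
- have D := Hd q1 q2 j; rewrite H12 H2s Hj in D; have := D isT isT E1 E2.
  rewrite Jp /= in K1 K2; rewrite Jp Hp andbT; lia.
- by rewrite Jp.
- case: K1 => K1; last by rewrite -K1.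
  case: K2 => K2; last by rewrite -K2. lia.
- exact: key.
Qed.


Lemma part_lab m k (h : 'I_m -> nat) : (forall l, (h l < k)%N) ->
  (forall c, (c < k)%N -> exists l, h l = c) ->
  partition [set [set l | h l == (c : nat)] | c : 'I_k] [set: 'I_m] /\
  #|[set [set l | h l == (c : nat)] | c : 'I_k]| = k.
Proof.
move=> Hlt Hs.
have inj : injective (fun c : 'I_k => [set l | h l == (c : nat)]).
  move=> c1 c2 /setP E; have [l Hl] := Hs c1 (ltn_ord c1).
  have := E l; rewrite !inE Hl eqxx => /esym/eqP H; exact: val_inj.
split; last by rewrite card_imset // card_ord.
have n0 : set0 \notin [set [set l | h l == (c : nat)] | c : 'I_k].
  apply/imsetP => [[c _ E]]; have [l Hl] := Hs c (ltn_ord c).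
  by have := in_set0 l; rewrite E inE Hl eqxx.
rewrite /partition n0 andbT; apply/andP; split.
  apply/eqP/setP => l; rewrite inE; apply/bigcupP.
  exists [set l' | h l' == h l]; last by rewrite inE.
  by apply/imsetP; exists (Ordinal (Hlt l)).
have [] := trivIimset (F := fun c : 'I_k => [set l | h l == (c : nat)]) _ n0 => //.
move=> c1 c2 _ _ ne; rewrite -setI_eq0; apply/eqP/setP => l; rewrite !inE.
apply/negP => /andP[/eqP E1 /eqP E2]; move/negP: ne; apply; apply/eqP/val_inj => /=; by rewrite -E1 -E2.
Qed.


Lemma nC_eq t v : good_vector t v -> nC t v = (2*t + size v + 1)%N.
Proof.
rewrite /nC => [[[[-> _]|[-> _]] _]]; rewrite ?eqxx; first lia.
case: eqP; lia.
Qed.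

Lemma vle t v p : good_vector t v -> (p < size v)%N -> (nth 0%N v p <= t)%N.
Proof.
move=> [[[_ /allP A]|[_ /allP A]] _] Hp; have := A _ (mem_nth 0%N Hp) => //.
by case/andP.
Qed.

Definition labC t v d : nat :=
  if d == 0%N then 0%N
  else if (d <= t)%N then (2*d - 1)%N
  else if (d <= t + size v)%N then
    (if nth 0%N v (d - t - 1) == 0%N then 0%N
     else if d - t == jpos v (nth 0%N v (d - t - 1)) then (2 * nth 0%N v (d-t-1) - 1)%N
     else (2 * nth 0%N v (d-t-1))%N)
  else (2 * (nC t v - d))%N.

Lemma lab_odd t v j d : good_vector t v -> (1 <= j <= t)%N -> (d < nC t v)%N ->
  labC t v d = (2*j-1)%N <-> d = j \/ d = (t + jpos v j)%N.
Proof.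
move=> gv Hj Hd; have Hn := nC_eq gv; have [Hr Ej Ej' Hk] := jpos_facts gv Hj.
have N1 : d = (t + jpos v j)%N -> nth 0%N v (d - t - 1) = j.
  by move=> ->; have -> : (t + jpos v j - t - 1 = (jpos v j).-1)%N by lia.
rewrite /labC; rewrite Hn in Hd *.
case: (d =P 0%N) => [->|d0]; first lia.
case: (leqP d t) => Hdt; first lia.
case: (leqP d (t + size v)) => Hds; last lia.
have Hds' : (d - t - 1 < size v)%N by lia.
have Hv := vle gv Hds'.
set j' := nth 0%N v (d - t - 1) in N1 Hv *.
case: (j' =P j) => [E|NE].
  rewrite E; case: eqP; first lia.
  case: eqP; lia.
case: eqP; first lia.
case: eqP; lia.
Qed.

Lemma lab_even t v j d : good_vector t v -> (1 <= j <= t)%N -> (d < nC t v)%N ->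
  labC t v d = (2*j)%N <-> d = (nC t v - j)%N \/ d = (t + jpos v j - j)%N.
Proof.
move=> gv Hj Hd; have Hn := nC_eq gv; have [Hr Ej Ej' Hk] := jpos_facts gv Hj.
rewrite /labC; rewrite Hn in Hd *.
case: (d =P 0%N) => [->|d0]; first by clear -Hj Hr; lia.
case: (leqP d t) => Hdt; first by clear -Hj Hr Hdt d0; lia.
case: (leqP d (t + size v)) => Hds; last by clear -Hj Hr Hds Hd; lia.
have Hds' : (d - t - 1 < size v)%N by clear -Hds Hdt; lia.
have Hv := vle gv Hds'.
case: (nth 0%N v (d - t - 1) =P j) => [E|NE].
  have K := Hk _ Hds' E; rewrite E; clear Hk Ej Ej' E Hv Hds'.
  move: K Hr; rewrite -!subn1; move: (jpos v j) => J K Hr.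
  case: K => K.
    case: eqP => [E1|E1]; first by clear -Hj E1; lia.
    case: eqP => [E2|E2]; by clear -Hj Hr Hds Hdt K E2; lia.
  case: eqP => [E1|E1]; first by clear -Hj E1; lia.
  case: eqP => [E2|E2]; by clear -Hj Hr Hds Hdt K E2 Hd; lia.
have N2 : d <> (t + jpos v j - j)%N.
  move=> E2; apply: NE; rewrite E2.
  have -> : (t + jpos v j - j - t - 1 = (jpos v j).-1 - j)%N by clear -Hr; lia.
  exact Ej'.
clear Hk Ej Ej' Hds'.
move: Hv NE; set j' := nth 0%N v (d - t - 1) => Hv NE.
case: eqP => [E1|E1]; first by clear -Hj Hds Hdt Hd N2 E1; lia.
case: eqP => [E2|E2]; first by clear -Hj Hds Hdt Hd N2 Hv; lia.
by clear -Hj Hds Hdt Hd N2 NE; lia.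
Qed.

Lemma lab_lt t v d : good_vector t v -> (d < nC t v)%N -> (labC t v d < 2 * t + 1)%N.
Proof.
move=> gv Hd; have Hn := nC_eq gv; rewrite /labC; rewrite Hn in Hd *.
case: (d =P 0%N) => [E0|d0]; first lia.
case: (leqP d t) => Hdt; first lia.
case: (leqP d (t + size v)) => Hds; last lia.
have Hds' : (d - t - 1 < size v)%N by lia.
have Hv := vle gv Hds'.
by case: ifP => _; [lia|case: ifP => _; lia].
Qed.

Lemma lab_zero t v d : good_vector t v -> (d < nC t v)%N -> labC t v d = 0%N ->
  d = 0%N \/ ((t < d <= t + size v)%N /\ nth 0%N v (d - t - 1) = 0%N).
Proof.
move=> gv Hd; have Hn := nC_eq gv; rewrite /labC; rewrite Hn in Hd *.
case: (d =P 0%N) => [E0|d0]; first lia.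
case: (leqP d t) => Hdt; first lia.
case: (leqP d (t + size v)) => Hds; last lia.
case: ifP => /eqP E; first by right; split => //; lia.
case: ifP => _; lia.
Qed.

Lemma lab_surj t v c : (0 < t)%N -> good_vector t v -> (c < 2 * t + 1)%N ->
  exists2 d, (d < nC t v)%N & labC t v d = c.
Proof.
move=> t0 gv Hc; have Hn := nC_eq gv.
case: (c =P 0%N) => [->|c0]; first by exists 0%N; rewrite ?Hn /labC //; lia.
have [j [Hj [E|E]]] : exists j, (1 <= j <= t)%N /\ (c = 2 * j - 1 \/ c = 2 * j)%N.
  exists (c.+1 %/ 2)%N; lia.
- exists j; first by rewrite Hn; lia.
  rewrite E; apply/(lab_odd gv Hj); [rewrite Hn; lia | by left].
- exists (nC t v - j)%N; first by rewrite Hn; lia.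
  rewrite E; apply/(lab_even gv Hj); [rewrite Hn; lia | by left].
Qed.

Local Open Scope ring_scope.


Definition dofC t v (i l : 'I_(nC t v)) : nat := ((l + nC t v - i) %% nC t v)%N.

Lemma modC_val t v k : val (modC t v k) = (k %% nC t v)%N. Proof. by []. Qed.

Lemma modC_ord t v (l : 'I_(nC t v)) : modC t v l = l.
Proof. by apply: val_inj; rewrite /= modn_small. Qed.

Lemma modC_addn t v k : modC t v (k + nC t v)%N = modC t v k.
Proof. by apply: val_inj; rewrite /= modnDr. Qed.

Lemma dof_ofs t v (i : 'I_(nC t v)) d : (d < nC t v)%N -> dofC i (modC t v (i + d)%N) = d.
Proof.
move=> Hd; rewrite /dofC modC_val -addnBA; last exact: ltnW.
rewrite modnDml.
have -> : (i + d + (nC t v - i) = d + nC t v)%N by have := ltn_ord i; lia.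
by rewrite modnDr modn_small.
Qed.

Lemma ofs_dof t v (i l : 'I_(nC t v)) : modC t v (i + dofC i l)%N = l.
Proof.
apply: val_inj; rewrite /= /dofC modnDmr.
have -> : (i + (l + nC t v - i) = l + nC t v)%N by have := ltn_ord i; lia.
by rewrite modnDr modn_small.
Qed.

Lemma dof_lt t v (i l : 'I_(nC t v)) : (dofC i l < nC t v)%N.
Proof. by rewrite /dofC ltn_mod nC_gt0. Qed.

Lemma entry (F : fieldType) t v (l : 'I_(nC t v)) x c : (c <= t)%N ->
  constructionC F t v l x 0 (inord c) = if c == 0%N then x 0 l else yC x l c.
Proof.
move=> Hc; rewrite /constructionC mxE.
have E : nat_of_ord (inord c : 'I_t.+1) = c by rewrite inordK.
case: (c =P 0%N) => [c0|c0].
  have -> : (inord c : 'I_t.+1) = ord0 by apply: val_inj; rewrite /= E.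
  by rewrite eqxx.
have -> : (inord c == ord0 :> 'I_t.+1) = false.
  by apply/eqP => /(congr1 val); rewrite /= E.
by rewrite E.
Qed.

Lemma yC_ofs (F : fieldType) t v (i : 'I_(nC t v)) d j (x : 'rV[F]_(nC t v)) :
  (t + jpos v j <= nC t v)%N ->
  yC x (modC t v (i + d)%N) j =
  x 0 (modC t v (i + d + nC t v - (t + jpos v j))%N) +
  x 0 (modC t v (i + d + nC t v - (t + jpos v j) + j)%N).
Proof.
move=> H; rewrite /yC /=; congr (_ + _); congr (x 0 _); apply: val_inj; rewrite /= -!addnBA //.
  by rewrite modnDml.
by rewrite -addnA modnDml addnA.
Qed.

Local Open Scope ring_scope.


Lemma sum2 (F : fieldType) (I : finType) (P : pred I) (G : I -> F) a b :
  a != b -> P a -> P b -> (forall l, P l -> l = a \/ l = b) ->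
  \sum_(l | P l) G l = G a + G b.
Proof.
move=> ab Pa Pb H; rewrite (bigD1 a) //= (bigD1 b) /=; last by rewrite Pb eq_sym.
rewrite big1 ?addr0 // => l /andP[/andP[Pl la] lb].
by case: (H l Pl) => E; [move: la|move: lb]; rewrite E eqxx.
Qed.

Lemma sum1 (F : fieldType) (I : finType) (P : pred I) (G : I -> F) a :
  P a -> (forall l, P l -> l != a -> G l = 0) ->
  \sum_(l | P l) G l = G a.
Proof.
move=> Pa H; rewrite (bigD1 a) //= big1 ?addr0 // => l /andP[Pl la]; exact: H.
Qed.

Definition colC t v d : nat := if (t < d <= t + size v)%N then nth 0%N v (d-t-1) else 0%N.
Definition coefC (F : fieldType) t v d : F :=
  (if d == 0%N then 1 else if (t < d <= t + size v)%N then
  (if nth 0%N v (d-t-1) == 0%N then 0 else 1) else -1)%R.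

Lemma cc_mid F t v d j : (t < d <= t + size v)%N -> nth 0%N v (d - t - 1) = j -> j != 0%N ->
  coefC F t v d = 1%R /\ colC t v d = j.
Proof.
move=> H E j0; rewrite /coefC /colC H E (negbTE j0).
by have -> : (d == 0%N) = false by apply/eqP; lia.
Qed.

Lemma cc_out F t v d : d != 0%N -> ~~ (t < d <= t + size v)%N ->
  coefC F t v d = (-1)%R /\ colC t v d = 0%N.
Proof. by move=> d0 H; rewrite /coefC /colC (negbTE d0) (negbTE H). Qed.

Lemma recov (F : fieldType) t v (i : 'I_(nC t v)) : (0 < t)%N -> good_vector t v ->
  exists P : {set {set 'I_(nC t v)}},
    partition P [set: 'I_(nC t v)] /\ #|P| = (2 * t + 1)%N /\
    forall R, R \in P ->
      exists (f : forall l : 'I_(nC t v), 'cV[F]_(t.+1)) (a : 'I_(nC t v) -> F),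
        forall x : 'rV[F]_(nC t v),
          x 0 i = \sum_(l in R) a l * (constructionC F t v l x *m f l) 0 0.
Proof.
move=> t0 gv; have Hn := nC_eq gv.
set h := fun l : 'I_(nC t v) => labC t v (dofC i l).
have Hs : forall c, (c < 2 * t + 1)%N -> exists l, h l = c.
  move=> c Hc; have [d Hd E] := lab_surj t0 gv Hc.
  by exists (modC t v (i + d)%N); rewrite /h dof_ofs.
have [Hpart Hcard] := @part_lab (nC t v) (2 * t + 1) h
  (fun l => lab_lt gv (dof_lt i l)) Hs.
exists [set [set l | h l == (c : nat)] | c : 'I_(2 * t + 1)]; split => //; split => //.
move=> R /imsetP [c _ ->].
exists (fun l => delta_mx (inord (colC t v (dofC i l))) 0), (fun l => coefC F t v (dofC i l)).
move=> x.
under eq_bigr => l _ do rewrite -colE mxE.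
set G := fun l => coefC F t v (dofC i l) *
     constructionC F t v l x 0 (inord (colC t v (dofC i l))).
rewrite (eq_bigl (fun l => h l == c)); last by move=> l; rewrite inE.
have Hlt := ltn_ord c; move: (nat_of_ord c) Hlt => cn Hcn.
have HG : forall d, (d < nC t v)%N -> G (modC t v (i + d)%N) =
    coefC F t v d * constructionC F t v (modC t v (i + d)%N) x 0 (inord (colC t v d)).
  by move=> d Hd; rewrite /G dof_ofs.
have Hi : modC t v (i + 0)%N = i by rewrite addn0 modC_ord.
have HL : forall l d, (d < nC t v)%N -> dofC i l = d -> l = modC t v (i + d)%N.
  by move=> l d _ <-; rewrite ofs_dof.
case: (cn =P 0%N) => [->|c0].
  rewrite (@sum1 _ _ _ _ i).
    have D0 : dofC i i = 0%N by rewrite -{2}Hi dof_ofs ?nC_gt0.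
    by rewrite D0 /coefC /colC /= entry //= mul1r.
  - by rewrite /h -{2}Hi dof_ofs ?nC_gt0.
  move=> l /eqP Hl li.
  case: (lab_zero gv (dof_lt i l) Hl) => [E|[Hm Ez]].
    by move: li; rewrite (HL l 0%N) ?nC_gt0 // Hi eqxx.
  rewrite /G /coefC Hm Ez eqxx.
  have -> : (dofC i l == 0%N) = false by apply/eqP; lia.
  by rewrite mul0r.
have [j [Hj [E|E]]] : exists j, (1 <= j <= t)%N /\ (cn = 2 * j - 1 \/ cn = 2 * j)%N.
  exists (cn.+1 %/ 2)%N; lia.
- have [Hr Ej Ej' Hk] := jpos_facts gv Hj.
  have d1 : (j < nC t v)%N by lia.
  have d2 : (t + jpos v j < nC t v)%N by lia.
  rewrite E (@sum2 _ _ _ _ (modC t v (i + j)%N) (modC t v (i + (t + jpos v j))%N)).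
  + rewrite !dof_ofs //.
  have j0 : j != 0%N by apply/eqP; lia.
  have [c1 k1] : coefC F t v j = (-1)%R /\ colC t v j = 0%N.
    by apply: cc_out => //; apply/negP; lia.
  have [c2 k2] : coefC F t v (t + jpos v j) = 1%R /\ colC t v (t + jpos v j) = j.
    apply: cc_mid => //; first lia.
    by have -> : (t + jpos v j - t - 1 = (jpos v j).-1)%N by lia.
  rewrite c1 k1 c2 k2 !entry //= ?(negbTE j0). have H := @yC_ofs F t v i (t + jpos v j)%N j x. rewrite H; last by lia.
  have -> : (i + (t + jpos v j) + nC t v - (t + jpos v j) = i + nC t v)%N by lia.
  rewrite modC_addn modC_ord.
  have -> : (i + nC t v + j = (i + j) + nC t v)%N by lia.
  rewrite modC_addn; ring.
  all: try lia.
  + by apply/eqP => /(congr1 (dofC i)); rewrite !dof_ofs //; lia.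
  + by rewrite /h dof_ofs //; apply/eqP/(lab_odd gv Hj d1); left.
  + by rewrite /h dof_ofs //; apply/eqP/(lab_odd gv Hj d2); right.
  + move=> l /eqP Hl; case/(lab_odd gv Hj (dof_lt i l)): Hl => Hl.
    * by left; apply: HL Hl.
    * by right; apply: HL Hl.
- have [Hr Ej Ej' Hk] := jpos_facts gv Hj.
  have d1 : (nC t v - j < nC t v)%N by lia.
  have d2 : (t + jpos v j - j < nC t v)%N by lia.
  rewrite E (@sum2 _ _ _ _ (modC t v (i + (nC t v - j))%N) (modC t v (i + (t + jpos v j - j))%N)).
  + rewrite !dof_ofs //.
    have j0 : j != 0%N by apply/eqP; lia.
    have [c1 k1] : coefC F t v (nC t v - j)%N = (-1)%R /\ colC t v (nC t v - j)%N = 0%N.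
      by apply: cc_out; [apply/eqP; rewrite Hn; lia | apply/negP; rewrite Hn; lia].
    have [c2 k2] : coefC F t v (t + jpos v j - j)%N = 1%R /\ colC t v (t + jpos v j - j)%N = j.
      apply: cc_mid => //; first lia.
      by have -> : (t + jpos v j - j - t - 1 = (jpos v j).-1 - j)%N by lia.
    rewrite c1 k1 c2 k2 !entry //= ?(negbTE j0).
    have H := @yC_ofs F t v i (t + jpos v j - j)%N j x.
    rewrite H; last by lia.
    have -> : (i + (t + jpos v j - j) + nC t v - (t + jpos v j) = i + (nC t v - j))%N.
      by lia.
    have -> : (i + (nC t v - j) + j = i + nC t v)%N by lia.
    rewrite modC_addn modC_ord; ring.
    all: try lia.
  + by apply/eqP => /(congr1 (dofC i)); rewrite !dof_ofs //; lia.
  + by rewrite /h dof_ofs //; apply/eqP/(lab_even gv Hj d1); left.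
  + by rewrite /h dof_ofs //; apply/eqP/(lab_even gv Hj d2); right.
  + move=> l /eqP Hl; case/(lab_even gv Hj (dof_lt i l)): Hl => Hl.
    * by left; apply: HL Hl.
    * by right; apply: HL Hl.
Qed.
Local Close Scope ring_scope.


Theorem lemma4p6 (F : finFieldType) (t : nat) (v : seq nat) :
  (0 < t)%N -> good_vector t v ->
  is_PIR_array_code F (nC t v) ((t + 1) * nC t v) (2 * t + 1) (nC t v)
    (fun _ => t.+1) (constructionC F t v).
Proof.
move=> t0 gv; split; [|split; [|split]].
- move=> l a u w; apply/rowP => k; rewrite !mxE.
  case: ifP => _; rewrite ?mxE //.
  rewrite /yC !mxE; ring.
- by [].
- by rewrite sum_nat_const card_ord mulnC addn1.
- move=> i; exact: recov.
Qed.
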